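(* Let $\Gamma$ be a groupoid over a set $B$ with source and target maps $\alpha,\beta:\Gamma\to B$, and let $L\subset\Gamma$. The following are equivalent: (1) there is a subset $K\subset\Gamma$ such that $LK=E_\Gamma$ and $KL=E_\Gamma$; (2) the restrictions $\alpha|_L:L\to B$ and $\beta|_L:L\to B$ are bijections.
   Context: A groupoid over a set $B$ is a set $\Gamma$ with surjections $\alpha,\beta:\Gamma\to B$, a product $\gamma_1\gamma_2$ defined when $\beta(\gamma_1)=\alpha(\gamma_2)$, identities $e_b$ ($b\in B$) and inverses $\gamma^{-1}$, satisfying $\alpha(\gamma_1\gamma_2)=\alpha(\gamma_1)$, $\beta(\gamma_1\gamma_2)=\beta(\gamma_2)$, $\alpha(e_b)=\beta(e_b)=b$, $\alpha(\gamma^{-1})=\beta(\gamma)$, $\beta(\gamma^{-1})=\alpha(\gamma)$, and the usual associativity, unit and inverse axioms. For subsets $L_1,L_2\subset\Gamma$, $L_1L_2=\{\gamma_1\gamma_2:\gamma_1\in L_1,\gamma_2\in L_2,\beta(\gamma_1)=\alpha(\gamma_2)\}$, and $E_\Gamma=\{e_b:b\in B\}$. *)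

(* Defs.v *)
From Stdlib Require Export FinFun.

(* A groupoid over B.  The product [mul] is a total function on Gamma x Gamma,
   but it is only constrained (and only ever used) on composable pairs,
   i.e. when [beta g1 = alpha g2]. *)
Record Groupoid (B : Type) := {
  carrier :> Type;
  alpha : carrier -> B;
  beta : carrier -> B;
  mul : carrier -> carrier -> carrier;
  unit : B -> carrier;
  inv : carrier -> carrier;
  alpha_surj : forall b, exists g, alpha g = b;
  beta_surj : forall b, exists g, beta g = b;
  alpha_mul : forall g1 g2, beta g1 = alpha g2 -> alpha (mul g1 g2) = alpha g1;
  beta_mul : forall g1 g2, beta g1 = alpha g2 -> beta (mul g1 g2) = beta g2;
  alpha_unit : forall b, alpha (unit b) = b;
  beta_unit : forall b, beta (unit b) = b;
  alpha_inv : forall g, alpha (inv g) = beta g;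
  beta_inv : forall g, beta (inv g) = alpha g;
  mulA : forall g1 g2 g3, beta g1 = alpha g2 -> beta g2 = alpha g3 ->
    mul (mul g1 g2) g3 = mul g1 (mul g2 g3);
  mul_unitl : forall g, mul (unit (alpha g)) g = g;
  mul_unitr : forall g, mul g (unit (beta g)) = g;
  mul_invr : forall g, mul g (inv g) = unit (alpha g);
  mul_invl : forall g, mul (inv g) g = unit (beta g)
}.

Arguments alpha {B G} _ : rename.
Arguments beta {B G} _ : rename.
Arguments mul {B G} _ _ : rename.
Arguments unit {B G} _ : rename.
Arguments inv {B G} _ : rename.

Definition setmul {B} {G : Groupoid B} (L1 L2 : G -> Prop) : G -> Prop :=
  fun g => exists g1 g2, L1 g1 /\ L2 g2 /\ beta g1 = alpha g2 /\ g = mul g1 g2.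

Definition units_set {B} {G : Groupoid B} : G -> Prop :=
  fun g => exists b, g = unit b.

Definition set_eq {T} (P Q : T -> Prop) : Prop := forall x, P x <-> Q x.

Definition restrict {B} {G : Groupoid B} (L : G -> Prop) (f : G -> B)
  : {g : G | L g} -> B := fun x => f (proj1_sig x).

(* Main.v *)
Require Import Defs.
From Stdlib Require Import ClassicalEpsilon ProofIrrelevance.

Lemma bij_of (A C : Type) (f : A -> C) :
  (forall x y, f x = f y -> x = y) -> (forall c, exists a, f a = c) -> Bijective f.
Proof.
  intros Hi Hs.
  exists (fun c => proj1_sig (constructive_indefinite_description _ (Hs c))).
  split.
  - intro x. destruct (constructive_indefinite_description _ (Hs (f x))) as [a Ha]; simpl.
    apply Hi; exact Ha.
  - intro y. destruct (constructive_indefinite_description _ (Hs y)) as [a Ha]; simpl. exact Ha.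
Qed.

Lemma sub_eq (A : Type) (P : A -> Prop) (x y : {a | P a}) :
  proj1_sig x = proj1_sig y -> x = y.
Proof.
  destruct x as [x px], y as [y py]; simpl; intro E; subst.
  f_equal; apply proof_irrelevance.
Qed.

Section S.
Variables (B : Type) (G : Groupoid B).

Lemma lem1 (l k : G) c : beta l = alpha k -> mul l k = unit c -> l = inv k.
Proof.
  intros H E.
  assert (Hc : c = beta k).
  { rewrite <- (beta_unit _ G c), <- E. apply beta_mul; auto. }
  rewrite <- (mul_unitr _ G l), H, <- mul_invr.
  rewrite <- mulA; auto. 2: now rewrite alpha_inv.
  rewrite E, Hc, <- alpha_inv. apply mul_unitl.
Qed.

Lemma lem2 (k l : G) c : beta k = alpha l -> mul k l = unit c -> l = inv k.
Proof.
  intros H E.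
  assert (Hc : c = alpha k).
  { rewrite <- (alpha_unit _ G c), <- E. apply alpha_mul; auto. }
  rewrite <- (mul_unitl _ G l), <- H, <- mul_invl.
  rewrite mulA; auto. 2: now rewrite beta_inv.
  rewrite E, Hc, <- beta_inv. apply mul_unitr.
Qed.
End S.

Theorem proposition7 (B : Type) (G : Groupoid B) (L : G -> Prop) :
  (exists K : G -> Prop,
      set_eq (setmul L K) units_set /\ set_eq (setmul K L) units_set)
  <->
  (Bijective (restrict L alpha) /\ Bijective (restrict L beta)).
Proof.
  split.
  - intros [K [H1 H2]].
    assert (LK : forall l k, L l -> K k -> beta l = alpha k -> l = inv k).
    { intros l k Hl Hk E. destruct (proj1 (H1 (mul l k))) as [c Hc].
      - exists l, k; auto.
      - eapply lem1; eauto. }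
    assert (KL : forall k l, K k -> L l -> beta k = alpha l -> l = inv k).
    { intros k l Hk Hl E. destruct (proj1 (H2 (mul k l))) as [c Hc].
      - exists k, l; auto.
      - eapply lem2; eauto. }
    split; apply bij_of.
    + intros [x px] [y py]; unfold restrict; simpl; intro E.
      apply sub_eq; simpl.
      destruct (proj2 (H1 (unit (alpha x)))) as [l [k [Hl [Hk [E1 E2]]]]].
      { eexists; reflexivity. }
      assert (Hb : beta k = alpha x).
      { rewrite <- (beta_unit _ G (alpha x)), E2. symmetry; apply beta_mul; auto. }
      rewrite (KL k x), (KL k y); auto. congruence.
    + intro c. destruct (proj2 (H1 (unit c))) as [l [k [Hl [Hk [E1 E2]]]]].
      { eexists; reflexivity. }
      exists (exist _ l Hl); unfold restrict; simpl.
      rewrite <- (alpha_unit _ G c), E2. symmetry; apply alpha_mul; auto.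
    + intros [x px] [y py]; unfold restrict; simpl; intro E.
      apply sub_eq; simpl.
      destruct (proj2 (H2 (unit (beta x)))) as [k [l [Hk [Hl [E1 E2]]]]].
      { eexists; reflexivity. }
      assert (Hb : alpha k = beta x).
      { rewrite <- (alpha_unit _ G (beta x)), E2. symmetry; apply alpha_mul; auto. }
      rewrite (LK x k), (LK y k); auto; congruence.
    + intro c. destruct (proj2 (H2 (unit c))) as [k [l [Hk [Hl [E1 E2]]]]].
      { eexists; reflexivity. }
      exists (exist _ l Hl); unfold restrict; simpl.
      rewrite <- (beta_unit _ G c), E2. symmetry; apply beta_mul; auto.
  - intros [[ga [Ha1 Ha2]] [gb [Hb1 Hb2]]].
    unfold restrict in *.
    assert (Ia : forall x y, L x -> L y -> alpha x = alpha y -> x = y).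
    { intros x y px py E.
      assert (exist _ x px = exist L y py) as E'.
      { rewrite <- (Ha1 (exist L x px)). rewrite <- (Ha1 (exist L y py)). simpl. f_equal. exact E. }
      injection E'; auto. }
    assert (Ib : forall x y, L x -> L y -> beta x = beta y -> x = y).
    { intros x y px py E.
      assert (exist _ x px = exist L y py) as E'.
      { rewrite <- (Hb1 (exist L x px)). rewrite <- (Hb1 (exist L y py)). simpl. f_equal. exact E. }
      injection E'; auto. }
    exists (fun k => exists l, L l /\ k = inv l). split.
    + intro g; split.
      * intros [l [k [Hl [[l' [Hl' ->]] [E ->]]]]].
        rewrite alpha_inv in E.
        rewrite (Ib l l') in * by auto. exists (alpha l'). apply mul_invr.
      * intros [b ->]. destruct (ga b) as [l pl] eqn:El.
        pose proof (Ha2 b) as Hb. rewrite El in Hb; simpl in Hb.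
        exists l, (inv l). repeat split; auto.
        -- exists l; auto.
        -- now rewrite alpha_inv.
        -- rewrite mul_invr; congruence.
    + intro g; split.
      * intros [k [l [[l' [Hl' ->]] [Hl [E ->]]]]].
        rewrite beta_inv in E.
        rewrite (Ia l l') in * by auto. exists (beta l'). apply mul_invl.
      * intros [b ->]. destruct (gb b) as [l pl] eqn:El.
        pose proof (Hb2 b) as Hb. rewrite El in Hb; simpl in Hb.
        exists (inv l), l. repeat split; auto.
        -- exists l; auto.
        -- now rewrite beta_inv.
        -- rewrite mul_invl; congruence.
Qed.
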